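(* Let $S$ be a semibounded relation in $\mathfrak H$ with lower bound $\gamma\in\mathbb R$ and let $c\le\gamma$. For every semibounded selfadjoint extension $H$ of $S$ one has: $c\le H$ if and only if $\mathfrak t_{S_{{\rm K},c}}\le\mathfrak t_H$ (i.e. $S_{{\rm K},c}\le H$).
   Context: Linear relations in $\mathfrak H$ are linear subspaces of $\mathfrak H\times\mathfrak H$; $T^*$ adjoint, $T^{**}$ closure, $RT=\{\{f,h\}:\exists g,\{f,g\}\in T,\{g,h\}\in R\}$, $c+T=\{\{f,g+cf\}:\{f,g\}\in T\}$. $S$ is semibounded with lower bound $\gamma$ if $\gamma$ is the supremum of all $c$ with $(\varphi',\varphi)\ge c\|\varphi\|^2$ on $S$; $\mathfrak t(S)[\varphi,\psi]=(\varphi',\psi)$ on $\mathrm{dom}\,S$. A representing map for $\mathfrak t(S)-c$ is a linear operator $Q_c$ into a Hilbert space with $\mathrm{dom}\,Q_c=\mathrm{dom}\,S$ and $\mathfrak t(S)[\varphi,\psi]=c(\varphi,\psi)+(Q_c\varphi,Q_c\psi)$; companion relation $J_c=\{\{Q_c\varphi,\varphi'-c\varphi\}:\{\varphi,\varphi'\}\in S\}$; Kreĭn type extension $S_{{\rm K},c}=c+J_c^{**}J_c^*$. For a semibounded selfadjoint relation $H$, $\mathfrak t_H$ is its associated closed form (closure of $\mathfrak t(H)$). $\mathfrak t_1\le\mathfrak t_2$ means $\mathrm{dom}\,\mathfrak t_2\subset\mathrm{dom}\,\mathfrak t_1$ and $\mathfrak t_1[f,f]\le\mathfrak t_2[f,f]$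 on $\mathrm{dom}\,\mathfrak t_2$; $H\le K$ means $\mathfrak t_H\le\mathfrak t_K$; $c\le H$ means $(f',f)\ge c\|f\|^2$ for all $\{f,f'\}\in H$. *)

(* Defs.v *)
From HB Require Import structures.
From mathcomp Require Import all_boot all_order all_algebra.
From mathcomp Require Import reals.
From mathcomp.real_closed Require Export complex.
Set Implicit Arguments. Unset Strict Implicit. Unset Printing Implicit Defensive.
Import Order.TTheory GRing.Theory Num.Theory.
Local Open Scope ring_scope.
Local Open Scope complex_scope.

Section Defs.
Variable R : realType.
Local Notation C := R[i].

Section Space.
Variable V : lmodType C.
Variable ip : V -> V -> C.   (* (x, y), linear in x, antilinear in y *)

Definition inner_product : Prop :=
  [/\ (forall (a : C) x y z, ip (a *: x + y) z = a * ip x z + ip y z),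
      (forall x y, ip y x = (ip x y)^*),
      (forall x, 0 <= ip x x) &
      (forall x, ip x x = 0 -> x = 0)].

(* norm convergence, expressed with ||x||^2 = (x, x) *)
Definition cauchy_seq (u : nat -> V) : Prop :=
  forall e : R, 0 < e -> exists N : nat, forall n m : nat,
    (N <= n)%N -> (N <= m)%N -> `|ip (u n - u m) (u n - u m)| < e%:C.

Definition converges_to (u : nat -> V) (f : V) : Prop :=
  forall e : R, 0 < e -> exists N : nat, forall n : nat,
    (N <= n)%N -> `|ip (u n - f) (u n - f)| < e%:C.

Definition hilbert_space : Prop :=
  inner_product /\ forall u, cauchy_seq u -> exists f, converges_to u f.

Definition rel_ge (S : V -> V -> Prop) (c : R) : Prop :=
  forall f f', S f f' -> c%:C * ip f f <= ip f' f.

Definition lower_bound (S : V -> V -> Prop) (gamma : R) : Prop :=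
  (forall c, rel_ge S c -> c <= gamma) /\
  (forall b, (forall c, rel_ge S c -> c <= b) -> gamma <= b).

Definition semibounded (S : V -> V -> Prop) : Prop :=
  exists gamma : R, lower_bound S gamma.

(* closed_form H f v : f is in dom (closure of t(H)) and the closure takes
   the value v at [f, f]. *)
Definition closed_form (H : V -> V -> Prop) (f : V) (v : C) : Prop :=
  exists u u' : nat -> V,
    [/\ (forall n, H (u n) (u' n)),
        converges_to u f,
        (forall e : R, 0 < e -> exists N : nat, forall n m : nat,
           (N <= n)%N -> (N <= m)%N ->
           `|ip (u' n - u' m) (u n - u m)| < e%:C) &
        (forall e : R, 0 < e -> exists N : nat, forall n : nat,
           (N <= n)%N -> `|ip (u' n) (u n) - v| < e%:C)].

End Space.

Definition linear_rel (A B : lmodType C) (T : A -> B -> Prop) : Prop :=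
  T 0 0 /\ forall (a : C) f g f' g', T f g -> T f' g' ->
    T (a *: f + f') (a *: g + g').

Definition dom (A B : Type) (T : A -> B -> Prop) (f : A) : Prop :=
  exists g, T f g.

Definition adjoint (A B : lmodType C) (ipA : A -> A -> C) (ipB : B -> B -> C)
  (T : A -> B -> Prop) : B -> A -> Prop :=
  fun h k => forall f g, T f g -> ipB g h = ipA f k.

Definition rel_comp (X Y Z : Type) (Rl : Y -> Z -> Prop) (T : X -> Y -> Prop)
  : X -> Z -> Prop :=
  fun f h => exists g, T f g /\ Rl g h.

Definition rel_shift (V : lmodType C) (c : R) (T : V -> V -> Prop)
  : V -> V -> Prop :=
  fun f g' => exists g, T f g /\ g' = g + c%:C *: f.

Definition selfadjoint (V : lmodType C) (ip : V -> V -> C)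
  (H : V -> V -> Prop) : Prop :=
  forall f g, H f g <-> adjoint ip ip H f g.

Definition form_le (V : Type) (t1 t2 : V -> C -> Prop) : Prop :=
  forall f v, t2 f v -> (exists u, t1 f u) /\ (forall u, t1 f u -> u <= v).

Definition representing_map (V K : lmodType C) (ipV : V -> V -> C)
  (ipK : K -> K -> C) (S : V -> V -> Prop) (c : R) (Q : V -> K) : Prop :=
  (forall (a : C) f g, dom S f -> dom S g -> Q (a *: f + g) = a *: Q f + Q g) /\
  (forall phi phi' psi psi', S phi phi' -> S psi psi' ->
     ipV phi' psi = c%:C * ipV phi psi + ipK (Q phi) (Q psi)).

Definition companion (V K : lmodType C) (S : V -> V -> Prop) (c : R)
  (Q : V -> K) : K -> V -> Prop :=
  fun k h => exists phi phi', [/\ S phi phi', k = Q phi & h = phi' - c%:C *: phi].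

Definition krein_ext (V K : lmodType C) (ipV : V -> V -> C) (ipK : K -> K -> C)
  (S : V -> V -> Prop) (c : R) (Q : V -> K) : V -> V -> Prop :=
  let J := companion S c Q in
  let Jst := adjoint ipK ipV J in
  let Jstst := adjoint ipV ipK Jst in
  rel_shift c (rel_comp Jstst Jst).

End Defs.

(* Main.v *)
From mathcomp Require Import all_boot all_order all_algebra.
From mathcomp Require Import reals ring lra.
From mathcomp.real_closed Require Import complex.
Require Import Defs.
Set Implicit Arguments. Unset Strict Implicit. Unset Printing Implicit Defensive.
Import Order.TTheory GRing.Theory Num.Theory.
Local Open Scope ring_scope.
Local Open Scope complex_scope.

Section Cx.
Variable R : realType.
Local Notation C := R[i].
Definition ab2 (z : C) : R := complex.Re z ^+ 2 + complex.Im z ^+ 2.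

Lemma ab2_ge0 z : 0 <= ab2 z.
Proof. rewrite /ab2; case: z => a b /=; nra. Qed.

Lemma ab2D x y : ab2 (x + y) <= 2 * ab2 x + 2 * ab2 y.
Proof. case: x => a b; case: y => c d; rewrite /ab2 /=.
have := sqr_ge0 (a - c); have := sqr_ge0 (b - d); nra. Qed.

Lemma ab2M x y : ab2 (x * y) = ab2 x * ab2 y.
Proof. case: x => a b; case: y => c d; rewrite /ab2 /=; ring. Qed.

Lemma ab2N x : ab2 (- x) = ab2 x.
Proof. case: x => a b; rewrite /ab2 /=; ring. Qed.

Lemma ab2B x y : ab2 (x - y) = ab2 (y - x).
Proof. by rewrite -ab2N opprB. Qed.

Lemma ab2R (r : R) : ab2 r%:C = r ^+ 2.
Proof. rewrite /ab2 /=; ring. Qed.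

Lemma ab20 : ab2 0 = 0.
Proof. rewrite /ab2 /=; ring. Qed.

Lemma ab2_eq0 z : ab2 z = 0 -> z = 0.
Proof.
case: z => a b; rewrite /ab2 /= => h.
have ha : a = 0 by nra.
have hb : b = 0 by nra.
by rewrite ha hb.
Qed.

Lemma ab2J (z : C) : ab2 ((conjc z)) = ab2 z.
Proof. case: z => a b; rewrite /ab2 /=; ring. Qed.

Lemma mulJ (z : C) : z * (conjc z) = (ab2 z)%:C.
Proof. case: z => a b; rewrite /ab2 /=; apply/eqP; rewrite eq_complex /=; apply/andP; split; apply/eqP; ring. Qed.

Lemma ReJ (z : C) : complex.Re ((conjc z)) = complex.Re z.
Proof. by case: z. Qed.

Lemma Re_sq z : complex.Re z ^+ 2 <= ab2 z.
Proof. case: z => a b; rewrite /ab2 /=; nra. Qed.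

Lemma Im_sq z : complex.Im z ^+ 2 <= ab2 z.
Proof. case: z => a b; rewrite /ab2 /=; nra. Qed.

Lemma normC_ab2 z : `|z| ^+ 2 = (ab2 z)%:C.
Proof. by rewrite -add_Re2_Im2. Qed.

Lemma ge0_realE (z : C) : 0 <= z -> z = (complex.Re z)%:C.
Proof. case: z => a b; rewrite lecE /= => /andP[/eqP -> _]; done. Qed.

Lemma ge0_Re (z : C) : 0 <= z -> 0 <= complex.Re z.
Proof. case: z => a b; rewrite lecE /= => /andP[_ ->]; done. Qed.

Lemma lecRE (x y : R) : (x%:C <= y%:C) = (x <= y).
Proof. exact: lecR. Qed.

Lemma conjR (r : R) : (conjc (r%:C)) = r%:C.
Proof. exact: conjc_real. Qed.

Lemma conjD (x y : C) : (conjc (x + y)) = (conjc x) + (conjc y).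
Proof. case: x => a b; case: y => c d; rewrite /=; apply/eqP; rewrite eq_complex /=; apply/andP; split; apply/eqP; ring. Qed.

Lemma conjM (x y : C) : (conjc (x * y)) = (conjc x) * (conjc y).
Proof. case: x => a b; case: y => c d; rewrite /=; apply/eqP; rewrite eq_complex /=; apply/andP; split; apply/eqP; ring. Qed.

Lemma conjN (x : C) : (conjc (- x)) = - (conjc x).
Proof. by case: x. Qed.

Lemma conjB (x y : C) : (conjc (x - y)) = (conjc x) - (conjc y).
Proof. by rewrite conjD -conjN. Qed.

Lemma conjK (x : C) : (conjc (conjc x)) = x.
Proof. case: x => a b; by rewrite /= opprK. Qed.

Lemma conj0 : (conjc (0 : C)) = 0.
Proof. by rewrite /= oppr0. Qed.

Lemma normC_lt (z : C) (e : R) : 0 < e -> (`|z| < e%:C) = (ab2 z < e ^+ 2).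
Proof.
move=> he.
rewrite -ltcR -normC_ab2.
have -> : (e ^+ 2)%:C = (e%:C) ^+ 2 :> C.
  rewrite !expr2 /=; apply/eqP; rewrite eq_complex /=; apply/andP; split; apply/eqP; ring.
rewrite ltr_pXn2r // -?topredE //=.
by rewrite ler0c ltW.
Qed.

Lemma le0_small (x : R) : (forall e, 0 < e -> x < e) -> x <= 0.
Proof. move=> h; rewrite leNgt; apply/negP => hx; have := h _ hx; by rewrite ltxx. Qed.

End Cx.

Section Lim.
Variable R : realType.
Local Notation C := R[i].

Definition clim (s : nat -> C) (l : C) :=
  forall e : R, 0 < e -> exists N, forall n, (N <= n)%N -> ab2 (s n - l) < e.

Lemma clim_const (l : C) : clim (fun _ => l) l.
Proof. by move=> e he; exists 0%N => n _; rewrite subrr ab20. Qed.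

Lemma clim_add s t l m : clim s l -> clim t m -> clim (fun n => s n + t n) (l + m).
Proof.
move=> hs ht e he.
have he4 : 0 < e / 4 by rewrite divr_gt0.
have [N1 h1] := hs _ he4; have [N2 h2] := ht _ he4.
exists (maxn N1 N2) => n hn.
have hn1 : (N1 <= n)%N by apply: leq_trans hn; apply: leq_maxl.
have hn2 : (N2 <= n)%N by apply: leq_trans hn; apply: leq_maxr.
have := h1 _ hn1; have := h2 _ hn2.
have -> : s n + t n - (l + m) = (s n - l) + (t n - m) by ring.
move=> a b; have := ab2D (s n - l) (t n - m); lra.
Qed.

Lemma clim_scale (c : C) s l : clim s l -> clim (fun n => c * s n) (c * l).
Proof.
move=> hs e he.
have hc := ab2_ge0 c.
have he' : 0 < e / (ab2 c + 1) by rewrite divr_gt0 // ltr_pwDr.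
have [N h] := hs _ he'; exists N => n hn.
have -> : c * s n - c * l = c * (s n - l) by ring.
rewrite ab2M.
have := h _ hn; have := ab2_ge0 (s n - l).
set x := ab2 _ => hx hlt.
have : x * (ab2 c + 1) < e.
  by rewrite -ltr_pdivlMr ?ltr_pwDr.
nra.
Qed.

Lemma clim_opp s l : clim s l -> clim (fun n => - s n) (- l).
Proof.
move=> hs e he; have [N h] := hs _ he; exists N => n hn.
have -> : - s n - - l = - (s n - l) by ring.
by rewrite ab2N; apply: h.
Qed.

Lemma clim_sub s t l m : clim s l -> clim t m -> clim (fun n => s n - t n) (l - m).
Proof. by move=> hs ht; apply: clim_add hs (clim_opp ht). Qed.

Lemma clim_shift s l : clim s l -> clim (fun n => s n - l) 0.
Proof. by move=> hs e he; have [N h] := hs _ he; exists N => n hn; rewrite subr0; apply: h. Qed.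

Lemma clim_unshift s l : clim (fun n => s n - l) 0 -> clim s l.
Proof. by move=> hs e he; have [N h] := hs _ he; exists N => n hn; have := h _ hn; rewrite subr0. Qed.

Lemma clim0_mul a b : clim a 0 -> clim b 0 -> clim (fun n => a n * b n) 0.
Proof.
move=> ha hb e he.
have [N1 h1] := ha _ ltr01; have [N2 h2] := hb _ he.
exists (maxn N1 N2) => n hn.
have hn1 : (N1 <= n)%N by apply: leq_trans hn; apply: leq_maxl.
have hn2 : (N2 <= n)%N by apply: leq_trans hn; apply: leq_maxr.
have := h1 _ hn1; have := h2 _ hn2; rewrite !subr0 ab2M.
have := ab2_ge0 (a n); have := ab2_ge0 (b n); nra.
Qed.

Lemma clim_mul s t l m : clim s l -> clim t m -> clim (fun n => s n * t n) (l * m).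
Proof.
move=> hs ht; apply: clim_unshift.
have h1 := clim0_mul (clim_shift hs) (clim_shift ht).
have h2 := clim_scale l (clim_shift ht).
have h3 := clim_scale m (clim_shift hs).
have := clim_add (clim_add h1 h2) h3.
rewrite !mulr0 !addr0 => h e he; have [N hN] := h _ he; exists N => n hn.
have := hN _ hn.
have -> : (s n - l) * (t n - m) + l * (t n - m) + m * (s n - l) - 0 = s n * t n - l * m - 0 by ring.
done.
Qed.

Lemma clim_conj s l : clim s l -> clim (fun n => (conjc (s n))) ((conjc l)).
Proof.
move=> hs e he; have [N h] := hs _ he; exists N => n hn.
by rewrite -conjB ab2J; apply: h.
Qed.

Lemma clim_ext s t l : (forall n, s n = t n) -> clim s l -> clim t l.
Proof. by move=> E hs e he; have [N h] := hs _ he; exists N => n hn; rewrite -E; apply: h. Qed.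

Lemma clim_unique s l m : clim s l -> clim s m -> l = m.
Proof.
move=> hl hm; apply/eqP; rewrite -subr_eq0; apply/eqP; apply: ab2_eq0.
apply/eqP; rewrite eq_le ab2_ge0 andbT; apply: le0_small => e he.
have he4 : 0 < e / 4 by rewrite divr_gt0.
have [N1 h1] := hl _ he4; have [N2 h2] := hm _ he4.
have := h1 (maxn N1 N2) (leq_maxl _ _); have := h2 (maxn N1 N2) (leq_maxr _ _).
set x := s _ => a b.
have := ab2D (x - m) (l - x).
have -> : x - m + (l - x) = l - m by ring.
rewrite [ab2 (l - x)]ab2B; lra.
Qed.

Lemma clim_ge0 s l : (forall n, 0 <= s n) -> clim s l -> 0 <= l.
Proof.
move=> hp hs.
have hIm : complex.Im l = 0.
  apply/eqP; rewrite -sqrf_eq0 eq_le sqr_ge0 andbT; apply: le0_small => e he.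
  have [N h] := hs _ he; have := h N (leqnn N).
  have := Im_sq (s N - l).
  have := hp N; rewrite lecE => /andP[/eqP hI _].
  have -> : complex.Im (s N - l) = - complex.Im l.
    move: hI; case: (s N) => a b /= ->; case: (l) => c d /=; ring.
  lra.
rewrite lecE hIm eqxx /=.
rewrite leNgt; apply/negP => hlt.
have he : 0 < complex.Re l ^+ 2 by rewrite expr2 nmulr_rgt0.
have [N h] := hs _ he; have := h N (leqnn N).
have := Re_sq (s N - l).
have := hp N; rewrite lecE => /andP[_ hR].
have -> : complex.Re (s N - l) = complex.Re (s N) - complex.Re l.
  by case: (s N) => a b; case: (l) => c d.
move: hR hlt; set a := complex.Re (s N); set r := complex.Re l => hR hlt.
have h2 : 0 <= a * (a - 2 * r) by apply: mulr_ge0 => //; lra.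
have h3 : r ^+ 2 <= (a - r) ^+ 2.
  rewrite -subr_ge0; have -> : (a - r) ^+ 2 - r ^+ 2 = a * (a - 2 * r) by ring. done.
lra.
Qed.

Lemma clim_le s t l m : (forall n, s n <= t n) -> clim s l -> clim t m -> l <= m.
Proof.
move=> hp hs ht; rewrite -subr_ge0.
apply: clim_ge0 (clim_sub ht hs) => n; rewrite subr_ge0; exact: hp.
Qed.

Lemma normC_lt_ab2 (z : C) (e : R) : 0 < e -> `|z| < (Num.min e 1)%:C -> ab2 z < e.
Proof.
move=> he; have hm : 0 < Num.min e 1 by rewrite lt_min he ltr01.
rewrite normC_lt //.
have h1 : Num.min e 1 <= e by rewrite ge_min lexx.
have h2 : Num.min e 1 <= 1 by rewrite ge_min lexx orbT.
move: hm h1 h2; set m := Num.min e 1 => hm h1 h2; nra.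
Qed.

Lemma ab2_normC_lt (z : C) (e : R) : 0 < e -> ab2 z < e ^+ 2 -> `|z| < e%:C.
Proof. by move=> he; rewrite normC_lt. Qed.

Lemma clim_normE (s : nat -> C) (l : C) :
  clim s l <-> (forall e : R, 0 < e -> exists N : nat, forall n : nat,
           (N <= n)%N -> `|s n - l| < e%:C).
Proof.
split.
  move=> hs e he; have [N h] := hs (e ^+ 2) (exprn_gt0 2 he); exists N => n hn.
  by apply: ab2_normC_lt => //; apply: h.
move=> hs e he; have hm : 0 < Num.min e 1 by rewrite lt_min he ltr01.
have [N h] := hs _ hm; exists N => n hn; apply: normC_lt_ab2 => //; exact: h.
Qed.

End Lim.

Section IP.
Variable R : realType.
Local Notation C := R[i].

(* generic Cauchy-Schwarz for hermitian nonneg forms on a subspace *)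
Section CSg.
Variables (W : lmodType C) (b : W -> W -> C) (P : W -> Prop).
Hypothesis blin : forall a x y z, b (a *: x + y) z = a * b x z + b y z.
Hypothesis Pl : forall a x y, P x -> P y -> P (a *: x + y).
Hypothesis bh : forall x y, P x -> P y -> b y x = (conjc (b x y)).
Hypothesis bpos : forall x, P x -> 0 <= b x x.

Lemma real_quad (A B n : R) : 0 <= A -> 0 <= B -> 0 <= n ->
  (forall t, 0 <= A - 2 * t * n + t ^+ 2 * n * B) -> n <= A * B.
Proof.
move=> hA hB hn h.
have [n0|npos] := eqVneq n 0; first by rewrite n0 mulr_ge0.
have npos' : 0 < n by rewrite lt_def npos hn.
have [A0|Apos] := eqVneq A 0.
  have := h (1 / (B + 1)).
  have hB1 : 0 < B + 1 by lra.
  set t := 1 / (B + 1).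
  have ht : t * (B + 1) = 1 by rewrite /t mul1r mulVf // gt_eqF.
  have ht0 : 0 < t by rewrite /t divr_gt0.
  rewrite A0 => h1.
  have : 0 <= t * (- 2 * n + t * n * B) by nra.
  rewrite pmulr_rge0 // => h2.
  have : t * n * B < 2 * n.
    have -> : t * n * B = n * (t * B) by ring.
    have : t * B < 1 by nra.
    nra.
  lra.
have Apos' : 0 < A by rewrite lt_def Apos hA.
have := h (A / n).
have hAn : A / n * n = A by rewrite divfK // gt_eqF.
move: hAn; set q := A / n => hAn.
have -> : A - 2 * q * n + q ^+ 2 * n * B = A * (q * B - 1).
  rewrite -{1 2}hAn; ring.
rewrite pmulr_rge0 // subr_ge0 => h1.
have : q * B * n >= n by nra.
have -> : q * B * n = A * B by rewrite -hAn; ring.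
done.
Qed.

Lemma bR x : P x -> b x x = (complex.Re (b x x))%:C.
Proof. by move=> hx; apply: ge0_realE; apply: bpos. Qed.

Lemma br_lin x y z a : P x -> P y -> P z -> b z (a *: x + y) = (conjc a) * b z x + b z y.
Proof.
move=> hx hy hz.
by rewrite (bh (Pl a hx hy) hz) blin conjD conjM -(bh hx hz) -(bh hy hz).
Qed.

Lemma CSgen x y : P x -> P y ->
  ab2 (b x y) <= complex.Re (b x x) * complex.Re (b y y).
Proof.
move=> hx hy.
set beta := b x y; set A := complex.Re (b x x); set B := complex.Re (b y y).
have hA : 0 <= A by apply: ge0_Re; apply: bpos.
have hB : 0 <= B by apply: ge0_Re; apply: bpos.
apply: real_quad => //; first exact: ab2_ge0.
move=> t.
set s := - (t%:C * beta).
have hz : P (s *: y + x) by apply: Pl.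
have := bpos hz.
rewrite blin !br_lin // (bR hx) (bR hy) -/A -/B (bh hx hy) -/beta.
have hJ := mulJ beta.
have hs : (conjc s) = - (t%:C * (conjc beta)) by rewrite /s conjN conjM conjR.
rewrite hs /s.
have -> : - (t%:C * beta) * (- (t%:C * (conjc beta)) * B%:C + (conjc beta)) +
   (- (t%:C * (conjc beta)) * beta + A%:C) =
   A%:C - 2%:R * t%:C * (beta * (conjc beta)) + t%:C ^+ 2 * (beta * (conjc beta)) * B%:C by ring.
rewrite hJ.
have -> : A%:C - 2%:R * t%:C * (ab2 beta)%:C + t%:C ^+ 2 * (ab2 beta)%:C * B%:C =
   (A - 2 * t * ab2 beta + t ^+ 2 * ab2 beta * B)%:C :> C.
  rewrite !expr2 /=; apply/eqP; rewrite eq_complex /=; apply/andP; split; apply/eqP; ring.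
by rewrite ler0c.
Qed.

End CSg.

Section Space.
Variables (U : lmodType C) (ip : U -> U -> C).
Hypothesis hip : inner_product ip.

Lemma ipDZl a x y z : ip (a *: x + y) z = a * ip x z + ip y z.
Proof. by case: hip => h _ _ _; apply: h. Qed.
Lemma ipC x y : ip y x = (conjc (ip x y)).
Proof. by case: hip => _ h _ _; apply: h. Qed.
Lemma ip_ge0 x : 0 <= ip x x.
Proof. by case: hip => _ _ h _; apply: h. Qed.
Lemma ip_eq0 x : ip x x = 0 -> x = 0.
Proof. by case: hip => _ _ _ h; apply: h. Qed.

Lemma ipDl x y z : ip (x + y) z = ip x z + ip y z.
Proof. by rewrite -[x]scale1r ipDZl mul1r scale1r. Qed.
Lemma ip0l z : ip 0 z = 0.
Proof.
have := ipDl 0 0 z; rewrite addr0 => h.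
have : ip 0 z + ip 0 z - ip 0 z = 0 by rewrite -h subrr.
by rewrite addrK.
Qed.
Lemma ipZl a x z : ip (a *: x) z = a * ip x z.
Proof. by rewrite -[a *: x]addr0 ipDZl ip0l addr0. Qed.
Lemma ipNl x z : ip (- x) z = - ip x z.
Proof. by rewrite -scaleN1r ipZl mulN1r. Qed.
Lemma ipBl x y z : ip (x - y) z = ip x z - ip y z.
Proof. by rewrite ipDl ipNl. Qed.
Lemma ipDr x y z : ip z (x + y) = ip z x + ip z y.
Proof. by rewrite ipC ipDl conjD -!ipC. Qed.
Lemma ipZr a x z : ip z (a *: x) = (conjc a) * ip z x.
Proof. by rewrite ipC ipZl conjM -ipC. Qed.
Lemma ip0r z : ip z 0 = 0.
Proof. by rewrite ipC ip0l conj0. Qed.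
Lemma ipNr x z : ip z (- x) = - ip z x.
Proof. by rewrite ipC ipNl conjN -ipC. Qed.
Lemma ipBr x y z : ip z (x - y) = ip z x - ip z y.
Proof. by rewrite ipDr ipNr. Qed.

Definition nm x := complex.Re (ip x x).
Lemma ipE x : ip x x = (nm x)%:C.
Proof. exact: ge0_realE (ip_ge0 x). Qed.
Lemma nm_ge0 x : 0 <= nm x.
Proof. exact: ge0_Re (ip_ge0 x). Qed.
Lemma nm_eq0 x : nm x = 0 -> x = 0.
Proof. by move=> h; apply: ip_eq0; rewrite ipE h. Qed.
Lemma nmN x : nm (- x) = nm x.
Proof. by rewrite /nm ipNl ipNr opprK. Qed.
Lemma nmB x y : nm (x - y) = nm (y - x).
Proof. by rewrite -nmN opprB. Qed.
Lemma nm0 : nm 0 = 0.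
Proof. by rewrite /nm ip0l. Qed.

Lemma CS x y : ab2 (ip x y) <= nm x * nm y.
Proof.
apply: (@CSgen U ip (fun _ => True)) => //.
- exact: ipDZl.
- by move=> a b _ _; apply: ipC.
- by move=> a _; apply: ip_ge0.
Qed.

Lemma nm_para x y : nm (x + y) + nm (x - y) = 2 * nm x + 2 * nm y.
Proof.
have : ip (x + y) (x + y) + ip (x - y) (x - y) = 2%:R * ip x x + 2%:R * ip y y.
  rewrite !ipDl !ipNl !ipDr !ipNr; ring.
rewrite !ipE => /(congr1 (@complex.Re R)) /=.
move=> ->; ring.
Qed.

Lemma nmD x y : nm (x + y) <= 2 * nm x + 2 * nm y.
Proof. have := nm_para x y; have := nm_ge0 (x - y); lra. Qed.

Lemma nmBt x y z : nm (x - z) <= 2 * nm (x - y) + 2 * nm (y - z).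
Proof. have -> : x - z = (x - y) + (y - z) by rewrite addrA subrK. exact: nmD. Qed.

Definition vlim (u : nat -> U) (f : U) :=
  forall e : R, 0 < e -> exists N, forall n, (N <= n)%N -> nm (u n - f) < e.

Lemma ltcnm (x : U) (e : R) : (`|ip x x| < e%:C) = (nm x < e).
Proof. by rewrite ipE ger0_norm ?ler0c ?nm_ge0 // ltcR. Qed.

Lemma convE u f : converges_to ip u f <-> vlim u f.
Proof.
split => h e he; have [N hN] := h e he; exists N => n hn; have := hN n hn;
  by rewrite ltcnm.
Qed.

Definition vcauchy (u : nat -> U) :=
  forall e : R, 0 < e -> exists N, forall n m, (N <= n)%N -> (N <= m)%N -> nm (u n - u m) < e.

Lemma cauchyE u : cauchy_seq ip u <-> vcauchy u.
Proof.
split => h e he; have [N hN] := h e he; exists N => n m hn hm; have := hN n m hn hm;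
  by rewrite ltcnm.
Qed.

Lemma vlim_cauchy u f : vlim u f -> vcauchy u.
Proof.
move=> h e he.
have he4 : 0 < e / 4 by rewrite divr_gt0.
have [N hN] := h _ he4; exists N => n m hn hm.
have := nmBt (u n) f (u m); rewrite [nm (f - u m)]nmB.
have := hN n hn; have := hN m hm; lra.
Qed.

Lemma vlim_unique u f g : vlim u f -> vlim u g -> f = g.
Proof.
move=> hf hg; apply/eqP; rewrite -subr_eq0; apply/eqP; apply: nm_eq0.
apply/eqP; rewrite eq_le nm_ge0 andbT; apply: le0_small => e he.
have he4 : 0 < e / 4 by rewrite divr_gt0.
have [N1 h1] := hf _ he4; have [N2 h2] := hg _ he4.
have := h1 (maxn N1 N2) (leq_maxl _ _); have := h2 (maxn N1 N2) (leq_maxr _ _).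
have := nmBt f (u (maxn N1 N2)) g; rewrite [nm (f - u _)]nmB. lra.
Qed.

Lemma vlim_const f : vlim (fun _ => f) f.
Proof. by move=> e he; exists 0%N => n _; rewrite subrr nm0. Qed.

Lemma ip_small a b : vlim a 0 -> vlim b 0 -> clim (fun n => ip (a n) (b n)) 0.
Proof.
move=> ha hb e he.
have [N1 h1] := ha _ ltr01; have [N2 h2] := hb _ he.
exists (maxn N1 N2) => n hn.
have hn1 : (N1 <= n)%N by apply: leq_trans hn; apply: leq_maxl.
have hn2 : (N2 <= n)%N by apply: leq_trans hn; apply: leq_maxr.
have := h1 _ hn1; have := h2 _ hn2; rewrite !subr0.
have := CS (a n) (b n); have := nm_ge0 (a n); have := nm_ge0 (b n); nra.
Qed.

Lemma ip_smalll a g : vlim a 0 -> clim (fun n => ip (a n) g) 0.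
Proof.
move=> ha e he.
have hg := nm_ge0 g.
have he' : 0 < e / (nm g + 1) by rewrite divr_gt0 // ltr_pwDr.
have [N h] := ha _ he'; exists N => n hn; rewrite subr0.
have := h _ hn; rewrite subr0 => hl.
have : nm (a n) * (nm g + 1) < e by rewrite -ltr_pdivlMr ?ltr_pwDr.
have := CS (a n) g; have := nm_ge0 (a n); nra.
Qed.

Lemma ip_smallr a g : vlim a 0 -> clim (fun n => ip g (a n)) 0.
Proof.
move=> ha; have := clim_conj (ip_smalll g ha); rewrite conj0.
by apply: clim_ext => n; rewrite -ipC.
Qed.

Lemma vlim_sub0 u f : vlim u f -> vlim (fun n => u n - f) 0.
Proof. by move=> h e he; have [N hN] := h e he; exists N => n hn; rewrite subr0; apply: hN. Qed.

Lemma ip_cont u f w g : vlim u f -> vlim w g -> clim (fun n => ip (u n) (w n)) (ip f g).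
Proof.
move=> hu hw.
have h1 := ip_small (vlim_sub0 hu) (vlim_sub0 hw).
have h2 := ip_smalll g (vlim_sub0 hu).
have h3 := ip_smallr f (vlim_sub0 hw).
have := clim_add (clim_add h1 h2) h3; rewrite !addr0 => h.
apply: clim_unshift; apply: clim_ext h => n.
rewrite !ipBl !ipBr; ring.
Qed.

Lemma vlim_add u f w g : vlim u f -> vlim w g -> vlim (fun n => u n + w n) (f + g).
Proof.
move=> hu hw e he.
have he4 : 0 < e / 4 by rewrite divr_gt0.
have [N1 h1] := hu _ he4; have [N2 h2] := hw _ he4.
exists (maxn N1 N2) => n hn.
have hn1 : (N1 <= n)%N by apply: leq_trans hn; apply: leq_maxl.
have hn2 : (N2 <= n)%N by apply: leq_trans hn; apply: leq_maxr.
have := h1 _ hn1; have := h2 _ hn2.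
have -> : u n + w n - (f + g) = (u n - f) + (w n - g) by rewrite opprD addrACA.
have := nmD (u n - f) (w n - g); lra.
Qed.

Lemma vlim_scale (a : C) u f : vlim u f -> vlim (fun n => a *: u n) (a *: f).
Proof.
move=> hu e he.
have ha := ab2_ge0 a.
have he' : 0 < e / (ab2 a + 1) by rewrite divr_gt0 // ltr_pwDr.
have [N h] := hu _ he'; exists N => n hn.
have := h _ hn => hl.
have E : nm (a *: u n - a *: f) = ab2 a * nm (u n - f).
  rewrite -scalerBr /nm ipZl ipZr mulrA mulJ ipE /=; ring.
rewrite E.
have : nm (u n - f) * (ab2 a + 1) < e by rewrite -ltr_pdivlMr ?ltr_pwDr.
have := nm_ge0 (u n - f); nra.
Qed.

End Space.
End IP.

From mathcomp Require Import classical_sets.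
From Stdlib Require Import ClassicalEpsilon.

Section Riesz.
Variable R : realType.
Local Notation C := R[i].

Lemma small_inv (e : R) : 0 < e -> exists N : nat, forall n, (N <= n)%N -> 1 / (n%:R + 1) < e.
Proof.
move=> he.
have h0 : 0 <= 1 / e by rewrite divr_ge0 // ltW.
have := archi_boundP h0; set N := Num.Def.archi_bound _ => hN.
exists N => n hn.
have hn' : (N%:R : R) <= n%:R by rewrite ler_nat.
have hpos : 0 < (n%:R : R) + 1 by rewrite ltr_pwDr // ler0n.
rewrite ltr_pdivrMr //.
have he1 : e * (1 / e) = 1 by rewrite mul1r divff // gt_eqF.
have : e * (1 / e) < e * N%:R by rewrite ltr_pM2l.
rewrite he1 => h1.
have := ler0n R n; nra.
Qed.

Lemma Re_small (s : nat -> C) l (e : R) : clim s l -> 0 < e ->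
  exists N, forall n, (N <= n)%N ->
    complex.Re (s n) - complex.Re l < e /\ complex.Re l - complex.Re (s n) < e.
Proof.
move=> hs he.
have [N h] := hs (e ^+ 2) (exprn_gt0 2 he); exists N => n hn.
have := h _ hn; have := Re_sq (s n - l).
have -> : complex.Re (s n - l) = complex.Re (s n) - complex.Re l.
  by case: (s n) => a b; case: (l) => c d.
set x := complex.Re (s n) - complex.Re l => h1 h2.
have h3 : x ^+ 2 < e ^+ 2 by lra.
rewrite !expr2 in h3.
split.
  rewrite ltNge; apply/negP => hx.
  have : e * e <= x * x by apply: ler_pM; lra.
  lra.
rewrite ltNge; apply/negP => hx.
have hx' : e <= - x by rewrite /x opprB.
have : e * e <= (- x) * (- x) by apply: ler_pM; lra.
rewrite mulrNN; lra.
Qed.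

Lemma ReM_R (t : R) (w : C) : complex.Re (t%:C * w) = t * complex.Re w.
Proof. by case: w => a b /=; ring. Qed.
Lemma ReD (x y : C) : complex.Re (x + y) = complex.Re x + complex.Re y.
Proof. by case: x => a b; case: y => c d. Qed.
Lemma ReN (x : C) : complex.Re (- x) = - complex.Re x.
Proof. by case: x. Qed.

Lemma Re_iM (w : C) : complex.Re ('i * w) = - complex.Im w.
Proof. by case: w => a b /=; ring. Qed.

Section RieszSec.
Variables (K : lmodType C) (ipK : K -> K -> C).
Hypothesis hK : hilbert_space ipK.
Variable P : K -> C -> Prop.
Hypothesis P00 : P 0 0.
Hypothesis Plin : forall a m z m' z', P m z -> P m' z' -> P (a *: m + m') (a * z + z').
Variable B : R.
Hypothesis B0 : 0 <= B.
Hypothesis Pb : forall m z, P m z -> ab2 z <= B * nm ipK m.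

Let hip : inner_product ipK := proj1 hK.

Let F m z := (nm ipK) m - 2 * complex.Re z.

Lemma F_lb m z : P m z -> - B <= F m z.
Proof.
move=> h; rewrite /F.
have h1 := Pb h; have h2 := Re_sq z; have h3 := nm_ge0 hip m.
set r := complex.Re z in h2 *; set x := (nm ipK) m in h1 h3 *.
have h4 : (2 * r) ^+ 2 <= (x + B) ^+ 2.
  have : (x + B) ^+ 2 - 4 * B * x = (x - B) ^+ 2 by ring.
  have := sqr_ge0 (x - B); nra.
have : 2 * r <= x + B.
  rewrite leNgt; apply/negP => hlt.
  have hxB : 0 <= x + B by apply: addr_ge0.
  have : (x + B) * (x + B) < (2 * r) * (2 * r) by apply: ltr_pM.
  rewrite !expr2 in h4; lra.
lra.
Qed.

Let E : set R := fun r => exists m z, P m z /\ r = - F m z.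

Lemma E_sup : has_sup E.
Proof.
split.
  exists 0; exists 0, 0; split => //; rewrite /F (nm0 hip) /=; ring.
exists B => r [m [z [hP ->]]]; have := F_lb hP; lra.
Qed.

Let s := sup E.

Lemma F_ge m z : P m z -> - s <= F m z.
Proof.
move=> h; have := sup_upper_bound E_sup (x := - F m z).
rewrite -/s => H; have := H (ex_intro _ m (ex_intro _ z (conj h erefl))); lra.
Qed.

Lemma approx_ex (j : nat) : exists p : K * C, P p.1 p.2 /\ F p.1 p.2 < - s + 1 / (j%:R + 1).
Proof.
have hp : 0 < 1 / (j%:R + 1 : R) by rewrite divr_gt0 // ltr_pwDr // ler0n.
have [r [m [z [hP ->]]] hr] := sup_adherent hp E_sup.
exists (m, z); split => //=; rewrite -/s in hr; lra.
Qed.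

Let mz (j : nat) : K * C := proj1_sig (constructive_indefinite_description _ (approx_ex j)).
Let mz_spec j : P (mz j).1 (mz j).2 /\ F (mz j).1 (mz j).2 < - s + 1 / (j%:R + 1).
Proof. exact: (proj2_sig (constructive_indefinite_description _ (approx_ex j))). Qed.

Let ms j := (mz j).1.
Let zs j := (mz j).2.

Lemma P_scale a m z : P m z -> P (a *: m) (a * z).
Proof. by move=> h; have := Plin a h P00; rewrite !addr0. Qed.

Lemma P_add m z m' z' : P m z -> P m' z' -> P (m + m') (z + z').
Proof. by move=> h h'; have := Plin 1 h h'; rewrite scale1r mul1r. Qed.

Lemma nmZ a x : nm ipK (a *: x) = ab2 a * nm ipK x.
Proof. by rewrite /nm ipZl // ipZr // mulrA mulJ (ipE hip) /=; ring. Qed.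

Lemma ms_cauchy : vcauchy ipK ms.
Proof.
move=> e he.
have he4 : 0 < e / 4 by rewrite divr_gt0.
have [N hN] := small_inv he4.
exists N => i j hi hj.
have [hPi hFi] := mz_spec i; have [hPj hFj] := mz_spec j.
rewrite -/(ms i) -/(zs i) -/(ms j) -/(zs j) in hPi hFi hPj hFj.
have hmid := P_scale ((1/2 : R)%:C) (P_add hPi hPj).
have hF := F_ge hmid.
have := hN _ hi; have := hN _ hj.
have hpara := nm_para hip (ms i) (ms j).
move: hF; rewrite /F nmZ ab2R ReM_R ReD.
move: hFi hFj; rewrite /F.
move: hpara.
rewrite expr2.
move=> *; lra.
Qed.

Lemma ms_lim : exists k, vlim ipK ms k.
Proof.
have [k hk] := proj2 hK ms (proj2 (cauchyE hip ms) ms_cauchy).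
by exists k; apply/(convE hip).
Qed.

Lemma riesz : exists k : K,
  (exists ms : nat -> K, (forall j, exists z, P (ms j) z) /\ vlim ipK ms k) /\
  (forall m z, P m z -> ipK m k = z).
Proof.
have [k hk] := ms_lim.
exists k; split.
  exists ms; split => // j; exists (zs j); exact: (proj1 (mz_spec j)).
have ReId : forall m z, P m z -> complex.Re (ipK m k) = complex.Re z.
  move=> m z hP.
  have g_ge0 : forall t : R, 0 <= t ^+ 2 * (nm ipK) m + 2 * (t * complex.Re (ipK m k) - t * complex.Re z).
    move=> t; rewrite -oppr_le0; apply: le0_small => e he.
    have he4 : 0 < e / 4 by rewrite divr_gt0.
    have hc := clim_scale t%:C (ip_smallr hip m (vlim_sub0 hk)).
    have hc' : clim (fun n => t%:C * ipK m (ms n)) (t%:C * ipK m k).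
      have := clim_add hc (clim_const (t%:C * ipK m k)).
      rewrite mulr0 add0r; apply: clim_ext => n.
      rewrite (ipBr hip); ring.
    have [N1 h1] := Re_small hc' he4.
    have [N2 h2] := small_inv he4.
    set j := maxn N1 N2.
    have [hj1 _] := h1 j (leq_maxl _ _).
    have hj2 := h2 j (leq_maxr _ _).
    have [hPj hFj] := mz_spec j.
    have hnew := F_ge (Plin t%:C hP hPj).
    move: hnew hFj hj1 hj2; rewrite /F.
    have -> : (nm ipK) (t%:C *: m + (mz j).1) =
      t ^+ 2 * (nm ipK) m + 2 * complex.Re (t%:C * ipK m ((mz j).1)) + (nm ipK) ((mz j).1).
      rewrite /nm !(ipDl hip) !(ipDr hip) !(ipZl hip) !(ipZr hip) conjR.
      rewrite !ReD !ReM_R.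
      have -> : complex.Re (ipK (mz j).1 m) = complex.Re (ipK m (mz j).1).
        by rewrite (ipC hip (mz j).1 m) ReJ.
      ring.
    rewrite ReD ReM_R ReM_R -/(ms j).
    set A := complex.Re (t%:C * ipK m (ms j)).
    set A0 := complex.Re (t%:C * ipK m k).
    move=> h3 h4 h5 h6.
    have : t * complex.Re (ipK m k) = A0 by rewrite /A0 ReM_R.
    lra.
  set al := complex.Re (ipK m k) - complex.Re z.
  have hb := nm_ge0 hip m.
  set bt := (nm ipK) m in g_ge0 hb.
  have hb1 : 0 < bt + 1 by lra.
  set t := - al / (bt + 1).
  have ht : t * (bt + 1) = - al by rewrite /t divfK // gt_eqF.
  have := g_ge0 t.
  have -> : t ^+ 2 * bt + 2 * (t * complex.Re (ipK m k) - t * complex.Re z) = t ^+ 2 * bt + 2 * t * al.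
    by rewrite /al; ring.
  have -> : t ^+ 2 * bt + 2 * t * al = - (t ^+ 2 * (bt + 2)).
    have -> : al = - (t * (bt + 1)) by rewrite ht opprK.
    ring.
  rewrite oppr_ge0 => h.
  have : t ^+ 2 * (bt + 2) = 0.
    apply/eqP; rewrite eq_le h mulr_ge0 ?sqr_ge0 //; lra.
  move/eqP; rewrite mulf_eq0 => /orP[|]; last by move=> /eqP; lra.
  rewrite sqrf_eq0 => /eqP t0.
  have : al = 0 by rewrite -[al]opprK -ht t0 mul0r oppr0.
  rewrite /al; lra.
move=> m z hP.
have h1 := ReId _ _ hP.
have h2 := ReId _ _ (P_scale 'i hP).
move: h2; rewrite (ipZl hip) !Re_iM => h2.
apply/eqP; rewrite eq_complex; apply/andP; split; apply/eqP => //.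
lra.
Qed.

End RieszSec.
End Riesz.

Section Prod.
Variable R : realType.
Local Notation C := R[i].

Section ProdSec.
Variables (V K : lmodType C) (ip : V -> V -> C) (ipK : K -> K -> C).
Hypothesis hV : hilbert_space ip.
Hypothesis hK : hilbert_space ipK.
Let hipV : inner_product ip := proj1 hV.
Let hipK : inner_product ipK := proj1 hK.

Definition ipP (p q : V * K) : C := ip p.1 q.1 + ipK p.2 q.2.

Lemma ipP_inner : inner_product ipP.
Proof.
split.
- move=> a x y z; rewrite /ipP /= (ipDZl hipV) (ipDZl hipK); ring.
- move=> x y; rewrite /ipP conjD -(ipC hipV) -(ipC hipK) //.
- move=> x; rewrite /ipP; apply: addr_ge0; [exact: (ip_ge0 hipV) | exact: (ip_ge0 hipK)].
- move=> [x y]; rewrite /ipP /= (ipE hipV) (ipE hipK) => h.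
  have hx := nm_ge0 hipV x; have hy := nm_ge0 hipK y.
  have h' : nm ip x + nm ipK y = 0.
    have := congr1 (@complex.Re R) h; rewrite ReD /=; done.
  have ex : nm ip x = 0 by lra.
  have ey : nm ipK y = 0 by lra.
  by rewrite (nm_eq0 hipV ex) (nm_eq0 hipK ey).
Qed.

Lemma nmP p : nm ipP p = nm ip p.1 + nm ipK p.2.
Proof. by rewrite /nm /ipP ReD. Qed.

Lemma vlimP_fst u f : vlim ipP u f -> vlim ip (fun n => (u n).1) f.1.
Proof.
move=> h e he; have [N hN] := h e he; exists N => n hn; have := hN n hn.
rewrite nmP /=; have := nm_ge0 hipK ((u n).2 - f.2); lra.
Qed.

Lemma vlimP_snd u f : vlim ipP u f -> vlim ipK (fun n => (u n).2) f.2.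
Proof.
move=> h e he; have [N hN] := h e he; exists N => n hn; have := hN n hn.
rewrite nmP /=; have := nm_ge0 hipV ((u n).1 - f.1); lra.
Qed.

Lemma ipP_hilbert : hilbert_space ipP.
Proof.
split; first exact: ipP_inner.
move=> u /(cauchyE ipP_inner) hu.
have h1 : vcauchy ip (fun n => (u n).1).
  move=> e he; have [N hN] := hu e he; exists N => n m hn hm; have := hN n m hn hm.
  rewrite nmP /=; have := nm_ge0 hipK ((u n).2 - (u m).2); lra.
have h2 : vcauchy ipK (fun n => (u n).2).
  move=> e he; have [N hN] := hu e he; exists N => n m hn hm; have := hN n m hn hm.
  rewrite nmP /=; have := nm_ge0 hipV ((u n).1 - (u m).1); lra.
have [f hf] := proj2 hV _ (proj2 (cauchyE hipV _) h1).
have [g hg] := proj2 hK _ (proj2 (cauchyE hipK _) h2).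
exists (f, g); apply/(convE ipP_inner) => e he.
move/(convE hipV): hf => hf; move/(convE hipK): hg => hg.
have he2 : 0 < e / 2 by rewrite divr_gt0.
have [N1 hN1] := hf _ he2; have [N2 hN2] := hg _ he2.
exists (maxn N1 N2) => n hn.
have hn1 : (N1 <= n)%N by apply: leq_trans hn; apply: leq_maxl.
have hn2 : (N2 <= n)%N by apply: leq_trans hn; apply: leq_maxr.
rewrite nmP /=; have := hN1 n hn1; have := hN2 n hn2; lra.
Qed.

End ProdSec.

Section Proj.
Variables (U : lmodType C) (ip : U -> U -> C).
Hypothesis hU : hilbert_space ip.
Let hip : inner_product ip := proj1 hU.
Variable M : U -> Prop.
Hypothesis M0 : M 0.
Hypothesis Ml : forall a x y, M x -> M y -> M (a *: x + y).

Lemma projection x : exists p,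
  (exists ms : nat -> U, (forall j, M (ms j)) /\ vlim ip ms p) /\
  (forall m, M m -> ip m p = ip m x).
Proof.
set P := fun m z => M m /\ z = ip m x.
have h00 : P 0 0 by split => //; rewrite (ip0l hip).
have hlin : forall a m z m' z', P m z -> P m' z' -> P (a *: m + m') (a * z + z').
  move=> a m z m' z' [hm ->] [hm' ->]; split; first exact: Ml.
  by rewrite (ipDZl hip).
have hb : forall m z, P m z -> ab2 z <= nm ip x * nm ip m.
  by move=> m z [_ ->]; rewrite mulrC; apply: CS.
have [p [[ms [hms hl]] hr]] := @riesz R U ip hU P h00 hlin (nm ip x) (nm_ge0 hip x) hb.
exists p; split.
  exists ms; split => // j; by have [z [hz _]] := hms j.
by move=> m hm; apply: hr; split.
Qed.

End Proj.

Section Adj.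
Variables (A B : lmodType C) (ipA : A -> A -> C) (ipB : B -> B -> C).
Hypothesis hA : inner_product ipA.
Hypothesis hB : inner_product ipB.
Variable T : A -> B -> Prop.

Lemma adj_lin a h k h' k' : adjoint ipA ipB T h k -> adjoint ipA ipB T h' k' ->
  adjoint ipA ipB T (a *: h + h') (a *: k + k').
Proof.
move=> H1 H2 f g hfg.
by rewrite (ipDr hB) (ipZr hB) (ipDr hA) (ipZr hA) (H1 _ _ hfg) (H2 _ _ hfg).
Qed.

Lemma adj_00 : adjoint ipA ipB T 0 0.
Proof. by move=> f g _; rewrite (ip0r hA) (ip0r hB). Qed.

Lemma adj_closed hs ks h k : (forall n, adjoint ipA ipB T (hs n) (ks n)) ->
  vlim ipB hs h -> vlim ipA ks k -> adjoint ipA ipB T h k.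
Proof.
move=> H hh hk f g hfg.
have c1 := ip_cont hB (vlim_const hB g) hh.
have c2 := ip_cont hA (vlim_const hA f) hk.
apply: (clim_unique c1); apply: clim_ext c2 => n; by rewrite (H n f g hfg).
Qed.

End Adj.
End Prod.

Section Main.
Variable R : realType.
Local Notation C := R[i].
Variables (V : lmodType C) (ip : V -> V -> C) (K : lmodType C) (ipK : K -> K -> C)
  (S : V -> V -> Prop) (c : R) (Q : V -> K).
Hypothesis hV : hilbert_space ip.
Hypothesis hK : hilbert_space ipK.
Hypothesis hS : linear_rel S.
Hypothesis hQ : representing_map ip ipK S c Q.
Let hipV : inner_product ip := proj1 hV.
Let hipK : inner_product ipK := proj1 hK.

Definition Tr : V -> K -> Prop := adjoint ipK ip (companion S c Q).
Definition Ar : K -> V -> Prop := adjoint ip ipK Tr.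

Lemma SKE f w : krein_ext ip ipK S c Q f w <-> exists k g, [/\ Tr f k, Ar k g & w = g + c%:C *: f].
Proof.
rewrite /krein_ext /rel_shift /rel_comp; split.
  by move=> [g [[k [h1 h2]] ->]]; exists k, g; split.
by move=> [k [g [h1 h2 ->]]]; exists g; split => //; exists k.
Qed.

Lemma T_lin a f k f' k' : Tr f k -> Tr f' k' -> Tr (a *: f + f') (a *: k + k').
Proof. exact: (adj_lin hipK hipV). Qed.
Lemma T_00 : Tr 0 0.
Proof. exact: (adj_00 hipK hipV). Qed.
Lemma A_lin a f k f' k' : Ar f k -> Ar f' k' -> Ar (a *: f + f') (a *: k + k').
Proof. exact: (adj_lin hipV hipK). Qed.
Lemma A_00 : Ar 0 0.
Proof. exact: (adj_00 hipV hipK). Qed.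

Lemma T_sub f k f' k' : Tr f k -> Tr f' k' -> Tr (f - f') (k - k').
Proof.
move=> h h'; have := T_lin 1 h (T_lin (-1) h' T_00).
by rewrite !scale1r !scaleN1r !addr0.
Qed.
Lemma A_sub f k f' k' : Ar f k -> Ar f' k' -> Ar (f - f') (k - k').
Proof.
move=> h h'; have := A_lin 1 h (A_lin (-1) h' A_00).
by rewrite !scale1r !scaleN1r !addr0.
Qed.

Lemma T_closed hs ks h k : (forall n, Tr (hs n) (ks n)) ->
  vlim ip hs h -> vlim ipK ks k -> Tr h k.
Proof. exact: (adj_closed hipK hipV). Qed.

Lemma key w k g : Tr w k -> Ar k g -> ip (g + c%:C *: w) w = c%:C * ip w w + ipK k k.
Proof.
move=> hT hA.
rewrite (ipDl hipV) (ipZl hipV) (ipC hipV w g) -(hA _ _ hT) (ipE hipK) conjR addrC //.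
Qed.

Lemma mulT_A m k g : Tr 0 m -> Ar k g -> ipK m k = 0.
Proof. by move=> hT hA; rewrite (hA _ _ hT) (ip0l hipV). Qed.

Lemma mulT_Q m phi phi' : Tr 0 m -> S phi phi' -> ipK (Q phi) m = 0.
Proof.
move=> hT hp; rewrite -(hT (Q phi) (phi' - c%:C *: phi)) ?(ip0r hipV) //.
by exists phi, phi'; split.
Qed.

Lemma Q0 : Q 0 = 0.
Proof.
have hd : dom S 0 by exists 0; case: hS.
have := (proj1 hQ) 1 0 0 hd hd; rewrite !scale1r addr0 => h.
have : Q 0 + Q 0 - Q 0 = 0 by rewrite -h subrr.
by rewrite addrK.
Qed.

Lemma ltc0 (e : R) : 0 < e -> (0 : C) < e%:C.
Proof. by move=> he; rewrite ltcE /= eqxx he. Qed.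

Variable H : V -> V -> Prop.
Hypothesis hH : selfadjoint ip H.
Hypothesis hSH : forall f g, S f g -> H f g.

Lemma dir_back :
  form_le (closed_form ip (krein_ext ip ipK S c Q)) (closed_form ip H) -> rel_ge ip H c.
Proof.
move=> hle f f' hff.
have hcf : closed_form ip H f (ip f' f).
  exists (fun _ => f), (fun _ => f'); split => //.
  - by apply/(convE hipV); apply: vlim_const.
  - by move=> e he; exists 0%N => n m _ _; rewrite !subrr (ip0l hipV) normr0 ltc0.
  - by move=> e he; exists 0%N => n _; rewrite subrr normr0 ltc0.
have [[u hu] hall] := hle f (ip f' f) hcf.
apply: le_trans (hall u hu).
move: hu => [w [w' [hSK hconv _ hval]]].
move/(convE hipV): hconv => hconv.
move/clim_normE: hval => hval.
have hs := clim_scale c%:C (ip_cont hipV hconv hconv).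
apply: (clim_le _ hs hval) => n.
have [k [g [hT hA ->]]] := proj1 (SKE (w n) (w' n)) (hSK n).
rewrite (key hT hA) lerDl; exact: ip_ge0.
Qed.


Lemma H_lin a f g f' g' : H f g -> H f' g' -> H (a *: f + f') (a *: g + g').
Proof.
move=> h h'; apply/hH; apply: (adj_lin hipV hipV); by apply/hH.
Qed.

Lemma realCM (x y : R) : (x * y)%:C = x%:C * y%:C :> C.
Proof. apply/eqP; rewrite eq_complex /=; apply/andP; split; apply/eqP; ring. Qed.

Section Fwd.
Hypothesis hge : rel_ge ip H c.

Let b (p q : V * V) : C := ip p.2 q.1 - c%:C * ip p.1 q.1.
Let PH (p : V * V) : Prop := H p.1 p.2.

Lemma b_lin a x y z : b (a *: x + y) z = a * b x z + b y z.
Proof. rewrite /b /= !(ipDZl hipV); ring. Qed.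
Lemma PH_lin a x y : PH x -> PH y -> PH (a *: x + y).
Proof. by move=> hx hy; apply: H_lin. Qed.
Lemma b_herm x y : PH x -> PH y -> b y x = conjc (b x y).
Proof.
move=> hx hy; rewrite /b conjB conjM conjR -!(ipC hipV).
by rewrite ((proj1 (hH _ _) hx) _ _ hy).
Qed.
Lemma b_pos x : PH x -> 0 <= b x x.
Proof. by move=> hx; rewrite /b subr_ge0; apply: hge. Qed.

Lemma bound_H u u' f v : (forall n, H (u n) (u' n)) -> vlim ip u f ->
  clim (fun n => ip (u' n) (u n)) v ->
  exists a : R, [/\ 0 <= a, v = c%:C * ip f f + a%:C &
    forall phi phi', S phi phi' -> ab2 (ip (phi' - c%:C *: phi) f) <= a * nm ipK (Q phi)].
Proof.
move=> hu hconv hval.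
set Y := fun n => b (u n, u' n) (u n, u' n).
have hY : clim Y (v - c%:C * ip f f).
  apply: clim_sub hval (clim_scale c%:C (ip_cont hipV hconv hconv)).
have hY0 : forall n, 0 <= Y n by move=> n; apply: b_pos; apply: hu.
have ha0 := clim_ge0 hY0 hY.
set a := complex.Re (v - c%:C * ip f f).
have haE : v - c%:C * ip f f = a%:C by apply: ge0_realE.
exists a; split.
- by rewrite -lecR -haE.
- by rewrite -haE addrC subrK.
move=> phi phi' hp.
set X := fun n => b (phi, phi') (u n, u' n).
have hX : clim X (ip phi' f - c%:C * ip phi f).
  apply: clim_sub; first exact: (ip_cont hipV (vlim_const hipV phi') hconv).
  apply: clim_scale; exact: (ip_cont hipV (vlim_const hipV phi) hconv).
have hbpp : b (phi, phi') (phi, phi') = ipK (Q phi) (Q phi).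
  by rewrite /b /= ((proj2 hQ) _ _ _ _ hp hp) addrC addKr.
have hle : forall n, X n * conjc (X n) <= (nm ipK (Q phi))%:C * Y n.
  move=> n; rewrite mulJ (ge0_realE (hY0 n)) -realCM lecR.
  have := @CSgen R (V * V)%type b PH b_lin PH_lin b_herm b_pos (phi, phi') (u n, u' n) (hSH hp) (hu n).
  by rewrite hbpp.
have := clim_le hle (clim_mul hX (clim_conj hX)) (clim_scale _ hY).
rewrite mulJ haE -realCM lecR (ipBl hipV) (ipZl hipV) => h.
by rewrite [a * _]mulrC.
Qed.


Lemma riesz_f f a : 0 <= a ->
  (forall phi phi', S phi phi' -> ab2 (ip (phi' - c%:C *: phi) f) <= a * nm ipK (Q phi)) ->
  exists k, [/\ Tr f k, nm ipK k <= a & forall m, Tr 0 m -> ipK m k = 0].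
Proof.
move=> ha hb.
set P := fun m z => exists phi phi', [/\ S phi phi', m = Q phi & z = ip (phi' - c%:C *: phi) f].
have h00 : P 0 0.
  exists 0, 0; split; first by case: hS.
  - by rewrite Q0.
  - by rewrite scaler0 subr0 (ip0l hipV).
have hlin : forall a0 m z m' z', P m z -> P m' z' -> P (a0 *: m + m') (a0 * z + z').
  move=> a0 m z m' z' [p1 [p1' [hp1 -> ->]]] [p2 [p2' [hp2 -> ->]]].
  exists (a0 *: p1 + p2), (a0 *: p1' + p2'); split.
  - by apply: (proj2 hS).
  - by rewrite (proj1 hQ) //; [exists p1' | exists p2'].
  - rewrite !(ipBl hipV) !(ipZl hipV) !(ipDZl hipV); ring.
have hPb : forall m z, P m z -> ab2 z <= a * nm ipK m.
  by move=> m z [p [p' [hp -> ->]]]; apply: hb.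
have [k [[ms [hms hl]] hr]] := @riesz R K ipK hK P h00 hlin a ha hPb.
exists k; split.
- move=> g h [p [p' [hp -> ->]]]; symmetry; apply: hr; by exists p, p'.
- have hle : forall n, ipK (ms n) k * conjc (ipK (ms n) k) <= a%:C * ipK (ms n) (ms n).
    move=> n; have [z hz] := hms n.
    rewrite (hr _ _ hz) mulJ (ipE hipK) -realCM lecR; exact: hPb.
  have := clim_le hle (clim_mul (ip_cont hipK hl (vlim_const hipK k)) (clim_conj (ip_cont hipK hl (vlim_const hipK k))))
     (clim_scale _ (ip_cont hipK hl hl)).
  rewrite (ipE hipK) mulJ ab2R -realCM lecR => h.
  have hn := nm_ge0 hipK k.
  have [->|hpos] := eqVneq (nm ipK k) 0; first by [].
  have hpos' : 0 < nm ipK k by rewrite lt_def hpos hn.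
  by rewrite -(ler_pM2r hpos') -expr2.
- move=> m hm.
  have h0 : forall n, ipK (ms n) m = 0.
    move=> n; have [z [p [p' [hp -> _]]]] := hms n; exact: mulT_Q hm hp.
  have := ip_cont hipK hl (vlim_const hipK m).
  move/(clim_ext h0) => hc.
  have := clim_unique hc (clim_const 0) => h.
  by rewrite (ipC hipK) h conj0.
Qed.


Lemma Re_lt_norm (z : C) (e : R) : 0 < e -> `|z| < e%:C -> complex.Re z < e.
Proof.
move=> he; rewrite normC_lt // => h.
have h2 := Re_sq z.
rewrite ltNge; apply/negP => hx.
have : e * e <= complex.Re z * complex.Re z by apply: ler_pM; lra.
rewrite !expr2 in h h2; lra.
Qed.

Lemma norm_small_real (x e : R) : 0 < e -> - e < x -> x < e -> `|(x%:C : C)| < e%:C.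
Proof.
move=> he h1 h2; rewrite normC_lt // ab2R.
have : 0 < (e - x) * (e + x) by apply: mulr_gt0; lra.
rewrite !expr2; lra.
Qed.

Lemma diffE w1 k1 g1 w2 k2 g2 : Tr w1 k1 -> Ar k1 g1 -> Tr w2 k2 -> Ar k2 g2 ->
  ip ((g1 + c%:C *: w1) - (g2 + c%:C *: w2)) (w1 - w2) =
  c%:C * ip (w1 - w2) (w1 - w2) + ipK (k1 - k2) (k1 - k2).
Proof.
move=> hT1 hA1 hT2 hA2.
have -> : (g1 + c%:C *: w1) - (g2 + c%:C *: w2) = (g1 - g2) + c%:C *: (w1 - w2).
  by rewrite opprD addrACA -scalerBr.
exact: key (T_sub hT1 hT2) (A_sub hA1 hA2).
Qed.

Lemma choose_SK (w w' : nat -> V) : (forall n, krein_ext ip ipK S c Q (w n) (w' n)) ->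
  exists (ks : nat -> K) (gs : nat -> V), forall n, [/\ Tr (w n) (ks n), Ar (ks n) (gs n) & w' n = gs n + c%:C *: w n].
Proof.
move=> h.
have hex : forall n, exists p : K * V, [/\ Tr (w n) p.1, Ar p.1 p.2 & w' n = p.2 + c%:C *: w n].
  by move=> n; have [k [g [h1 h2 h3]]] := proj1 (SKE _ _) (h n); exists (k, g).
exists (fun n => (proj1_sig (constructive_indefinite_description _ (hex n))).1).
exists (fun n => (proj1_sig (constructive_indefinite_description _ (hex n))).2).
move=> n; exact: (proj2_sig (constructive_indefinite_description _ (hex n))).
Qed.

Lemma sk_upper f k u : Tr f k -> (forall m, Tr 0 m -> ipK m k = 0) ->
  closed_form ip (krein_ext ip ipK S c Q) f u -> u = c%:C * ip f f + ipK k k.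
Proof.
move=> hT hperp [w [w' [hSK hconv hcau hval]]].
move/(convE hipV): hconv => hconv.
move/clim_normE: hval => hval.
have [ks [gs hkg]] := choose_SK hSK.
have hwc := vlim_cauchy hipV hconv.
have hkc : vcauchy ipK ks.
  move=> e he.
  have he2 : 0 < e / 2 by rewrite divr_gt0.
  have hc1 : 0 < `|c| + 1 by rewrite ltr_pwDr.
  have he3 : 0 < e / 2 / (`|c| + 1) by rewrite divr_gt0.
  have [N1 h1] := hcau _ he2; have [N2 h2] := hwc _ he3.
  exists (maxn N1 N2) => n m hn hm.
  have hn1 : (N1 <= n)%N by apply: leq_trans hn; apply: leq_maxl.
  have hn2 : (N2 <= n)%N by apply: leq_trans hn; apply: leq_maxr.
  have hm1 : (N1 <= m)%N by apply: leq_trans hm; apply: leq_maxl.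
  have hm2 : (N2 <= m)%N by apply: leq_trans hm; apply: leq_maxr.
  have := Re_lt_norm he2 (h1 n m hn1 hm1).
  have [hTn hAn ->] := hkg n; have [hTm hAm ->] := hkg m.
  rewrite (diffE hTn hAn hTm hAm) ReD (ipE hipV) (ipE hipK) ReM_R /=.
  have := h2 n m hn2 hm2.
  set x := nm ip (w n - w m); set y := nm ipK (ks n - ks m).
  have hx : 0 <= x by apply: nm_ge0.
  move=> hxs hre.
  have : x * (`|c| + 1) < e / 2 by rewrite -ltr_pdivlMr.
  have : - (c * x) <= `|c| * x.
    rewrite -mulNr; apply: ler_wpM2r => //; rewrite -normrN; exact: ler_norm.
  have := normr_ge0 c; nra.
have [k' hk'] := proj2 hK ks (proj2 (cauchyE hipK ks) hkc).
move/(convE hipK): hk' => hk'.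
have hT' : Tr f k' by apply: (T_closed _ hconv hk') => n; have [] := hkg n.
have hperp' : forall m, Tr 0 m -> ipK m k' = 0.
  move=> m hm.
  have h0 : forall n, ipK m (ks n) = 0 by move=> n; have [_ hA _] := hkg n; exact: mulT_A hm hA.
  have := ip_cont hipK (vlim_const hipK m) hk'.
  move/(clim_ext h0) => hc.
  by have := clim_unique hc (clim_const 0).
have ekk : k' = k.
  have hd := T_sub hT' hT; rewrite subrr in hd.
  apply/eqP; rewrite -subr_eq0; apply/eqP; apply: (ip_eq0 hipK).
  by rewrite (ipBr hipK) (hperp' _ hd) (hperp _ hd) subrr.
rewrite -ekk.
apply: (clim_unique hval).
have := clim_add (clim_scale c%:C (ip_cont hipV hconv hconv)) (ip_cont hipK hk' hk').
apply: clim_ext => n; have [hTn hAn ->] := hkg n.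
by rewrite (key hTn hAn).
Qed.


Lemma sk_exists f k : Tr f k -> (forall m, Tr 0 m -> ipK m k = 0) ->
  closed_form ip (krein_ext ip ipK S c Q) f (c%:C * ip f f + ipK k k).
Proof.
move=> hT hperp.
have hP := ipP_hilbert hV hK.
have hPi := proj1 hP.
set D := fun p : V * K => Tr p.1 p.2 /\ exists g, Ar p.2 g.
have D0 : D 0 by split; [exact: T_00 | exists 0; exact: A_00].
have Dl : forall a x y, D x -> D y -> D (a *: x + y).
  move=> a x y [hx [gx hgx]] [hy [gy hgy]]; split; first exact: T_lin.
  by exists (a *: gx + gy); apply: A_lin.
have [p0 [[ds [hds hl]] hr]] := projection hP D0 Dl (f, k).
have hl1 := vlimP_fst hK hl; have hl2 := vlimP_snd hV hl.
have hT0 : Tr p0.1 p0.2 by apply: (T_closed _ hl1 hl2) => n; have [] := hds n.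
set q1 := f - p0.1; set q2 := k - p0.2.
have hq : Tr q1 q2 by apply: T_sub.
set G := fun p : V * K => Tr p.1 p.2.
have G0 : G 0 by exact: T_00.
have Gl : forall a x y, G x -> G y -> G (a *: x + y) by move=> a x y hx hy; apply: T_lin.
have [r [[rs [hrs hrl]] hrr]] := projection hP G0 Gl (q1, 0).
have hTr : Tr r.1 r.2.
  by apply: (T_closed _ (vlimP_fst hK hrl) (vlimP_snd hV hrl)) => n; apply: hrs.
have hAr : Ar r.2 (q1 - r.1).
  move=> f0 g0 h0.
  have := hrr (f0, g0) h0; rewrite /ipP /= (ip0r hipK) addr0 => E.
  by rewrite (ipBr hipV) -E addrC addKr.
have hDr : D r by split => //; exists (q1 - r.1).
have hor : ip r.1 q1 + ipK r.2 q2 = 0.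
  have := hr r hDr; rewrite /ipP /= => E.
  by rewrite /q1 /q2 (ipBr hipV) (ipBr hipK) addrACA -E addrACA !subrr addr0.
have e1 : ipK r.2 q2 = ip (q1 - r.1) q1.
  by rewrite (ipC hipK) (hAr _ _ hq) -(ipC hipV).
have q10 : q1 = 0.
  apply: (ip_eq0 hipV).
  by rewrite -hor e1 (ipBl hipV q1 r.1) addrC subrK.
have hq2 : Tr 0 q2 by rewrite -q10.
have q20 : q2 = 0.
  apply: (ip_eq0 hipK).
  have h0 : forall n, ipK q2 (ds n).2 = 0.
    by move=> n; have [_ [g hg]] := hds n; exact: mulT_A hq2 hg.
  have := ip_cont hipK (vlim_const hipK q2) hl2.
  move/(clim_ext h0) => hc.
  have e0 := clim_unique hc (clim_const 0).
  by rewrite {2}/q2 (ipBr hipK) (hperp _ hq2) -e0 subrr.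
have ef : p0.1 = f by apply/eqP; rewrite eq_sym -subr_eq0; apply/eqP.
have ek : p0.2 = k by apply/eqP; rewrite eq_sym -subr_eq0; apply/eqP.
rewrite ef in hl1; rewrite ek in hl2.
set ws := fun n => (ds n).1; set ks := fun n => (ds n).2.
have hex : forall n, exists g, Ar (ks n) g by move=> n; have [_ hg] := hds n.
set gs := fun n => proj1_sig (constructive_indefinite_description _ (hex n)).
have hgs : forall n, Ar (ks n) (gs n) by move=> n; exact: (proj2_sig (constructive_indefinite_description _ (hex n))).
have hts : forall n, Tr (ws n) (ks n) by move=> n; have [] := hds n.
exists ws, (fun n => gs n + c%:C *: ws n); split.
- by move=> n; apply/SKE; exists (ks n), (gs n); split.
- by apply/(convE hipV).
- move=> e he.
  have he2 : 0 < e / 2 by rewrite divr_gt0.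
  have hc1 : 0 < `|c| + 1 by rewrite ltr_pwDr.
  have he3 : 0 < e / 2 / (`|c| + 1) by rewrite divr_gt0.
  have [N1 h1] := vlim_cauchy hipK hl2 he2; have [N2 h2] := vlim_cauchy hipV hl1 he3.
  exists (maxn N1 N2) => n m hn hm.
  have hn1 : (N1 <= n)%N by apply: leq_trans hn; apply: leq_maxl.
  have hn2 : (N2 <= n)%N by apply: leq_trans hn; apply: leq_maxr.
  have hm1 : (N1 <= m)%N by apply: leq_trans hm; apply: leq_maxl.
  have hm2 : (N2 <= m)%N by apply: leq_trans hm; apply: leq_maxr.
  rewrite (diffE (hts n) (hgs n) (hts m) (hgs m)) (ipE hipV) (ipE hipK) -realCM.
  have -> : (c * nm ip (ws n - ws m))%:C + (nm ipK (ks n - ks m))%:C =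
     (c * nm ip (ws n - ws m) + nm ipK (ks n - ks m))%:C :> C.
    apply/eqP; rewrite eq_complex /=; apply/andP; split; apply/eqP; ring.
  have := h1 n m hn1 hm1; have := h2 n m hn2 hm2.
  set x := nm ip (ws n - ws m); set y := nm ipK (ks n - ks m).
  have hx : 0 <= x by apply: nm_ge0.
  have hy : 0 <= y by apply: nm_ge0.
  move=> hxs hys.
  have : x * (`|c| + 1) < e / 2 by rewrite -ltr_pdivlMr.
  have : - (c * x) <= `|c| * x.
    rewrite -mulNr; apply: ler_wpM2r => //; rewrite -normrN; exact: ler_norm.
  have : c * x <= `|c| * x by apply: ler_wpM2r => //; exact: ler_norm.
  have := normr_ge0 c => *.
  apply: norm_small_real => //; nra.
- apply/clim_normE.
  have := clim_add (clim_scale c%:C (ip_cont hipV hl1 hl1)) (ip_cont hipK hl2 hl2).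
  apply: clim_ext => n.
  by rewrite (key (hts n) (hgs n)).
Qed.

Lemma dir_fwd : form_le (closed_form ip (krein_ext ip ipK S c Q)) (closed_form ip H).
Proof.
move=> f v [u [u' [hu hconv hcau hval]]].
move/(convE hipV): hconv => hconv.
move/clim_normE: hval => hval.
have [a [ha hv hb]] := bound_H hu hconv hval.
have [k [hT hka hperp]] := riesz_f ha hb.
split.
  by exists (c%:C * ip f f + ipK k k); apply: sk_exists.
move=> w hw; rewrite (sk_upper hT hperp hw) hv lerD2l (ipE hipK) lecR //.
Qed.

End Fwd.

End Main.

Local Close Scope complex_scope.
Unset Implicit Arguments.

Theorem corollary6p3 (R : realType)
  (V : lmodType R[i]) (ip : V -> V -> R[i])
  (K : lmodType R[i]) (ipK : K -> K -> R[i])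
  (S : V -> V -> Prop) (gamma c : R) (Q : V -> K) :
  hilbert_space ip -> hilbert_space ipK ->
  linear_rel S -> lower_bound ip S gamma -> c <= gamma ->
  representing_map ip ipK S c Q ->
  forall H : V -> V -> Prop,
    selfadjoint ip H -> semibounded ip H -> (forall f g, S f g -> H f g) ->
    (rel_ge ip H c <->
     form_le (closed_form ip (krein_ext ip ipK S c Q)) (closed_form ip H)).
Proof.
move=> hV hK hS _ _ hQ H hH _ hSH; split.
- by move=> hge; apply: dir_fwd.
- by apply: dir_back.
Qed.
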